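(* Let $\mathscr{D}$ be a commutative variety whose full subcategory $\mathscr{D}_f$ of finitely presentable objects is closed under subobjects, strong quotients and finite products. For any language $L:X^{\circledast}\to Y$ the following are equivalent: (a) $L$ is $\mathscr{D}$-regular; (b) the minimal $\mathscr{D}$-automaton $\mathrm{Min}(L)$ has finitely presentable carrier; (c) $L$ is recognized by some $\mathscr{D}$-monoid morphism $e:X^{\circledast}\to M$ with $M$ finitely presentable; (d) the syntactic $\mathscr{D}$-monoid $\mathrm{Syn}(L)$ has finitely presentable carrier.
   Context: A commutative variety $\mathscr{D}$ is a variety of finitary algebras in which for all $A,B$ the hom-set $\mathscr{D}(A,B)$ is a subalgebra $[A,B]$ of $B^{|A|}$; it is symmetric monoidal closed with tensor product $\otimes$ representing bimorphisms and unit $I=\Psi1$. An object is finitely presentable if it is an algebra presentable by finitely many generators and relations. Fix objects $X,Y$. $X^{\circledast}$ is the free $\mathscr{D}$-monoid (monoid object in $(\mathscr{D},\otimes,I)$) on $X$. A language is a morphism $L:X^{\circledast}\to Y$; it is recognized by a $\mathscr{D}$-monoid morphism $e:X^{\circledast}\to M$ if $L=f\cdot e$ for some $\mathscr{D}$-morphism $f:M\to Y$. A $\mathscr{D}$-automaton $(Q,\delta,i,f)$ has $\delta:X\otimes Q\to Q$, $i:I\to Q$, $f:Q\to Y$ and accepts $L_Q=f\cdot e_Q$ where $e_Q:X^{\circledast}\to Q$ is the unique algebra homomorphism for $FQ=I+X\otimes Q$ from the initial $F$-algebra $X^{\circledast}$. $L$ is $\mathscr{D}$-regular if it is accepted by some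 $\mathscr{D}$-automaton with finitely presentable state object. $\mathrm{Min}(L)$ is the (unique up to iso) automaton accepting $L$ that is reachable ($e_Q$ surjective) and simple (the unique coalgebra homomorphism into the final coalgebra $[X^{\circledast},Y]$ for $TQ=Y\times[X,Q]$ is injective). $\mathrm{Syn}(L)$ is the smallest quotient of $X^{\circledast}$ in $\mathbf{Mon}(\mathscr{D})$ recognizing $L$ (quotients ordered by factorization). *)

(* Defs.v *)
From Stdlib Require List.
From mathcomp Require Import all_boot.
Unset Printing Implicit Defensive.

Record signature := Signature { sym : Type; arity : sym -> nat }.

Inductive term (S : signature) (V : Type) : Type :=
| tvar : V -> term S V
| top : forall s : sym S, ('I_(arity S s) -> term S V) -> term S V.

Record alg (S : signature) := Alg {
  car :> Type;
  ops : forall s : sym S, ('I_(arity _ s) -> car) -> car }.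
Arguments car {S} _.
Arguments ops {S} a s _.

Fixpoint eval (S : signature) (V : Type) (A : alg S) (v : V -> A) (t : term S V) : A :=
  match t with
  | tvar x => v x
  | top s ts => ops A s (fun i => eval S V A v (ts i))
  end.
Arguments eval {S V A} v t.
Arguments tvar {S V} _.
Arguments top {S V} s _.

Record variety := Variety {
  vsig : signature;
  veqs : term vsig nat -> term vsig nat -> Prop }.


Definition model (D : variety) (A : alg (vsig D)) : Prop :=
  forall l r, veqs D l r -> forall v : nat -> A, eval v l = eval v r.

Definition hom (S : signature) (A B : alg S) (h : A -> B) : Prop :=
  forall s (args : 'I_(arity _ s) -> A), h (ops A s args) = ops B s (fun i => h (args i)).

Arguments hom {S A B} h.

Definition surj (A B : Type) (h : A -> B) : Prop := forall b, exists a, h a = b.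

(* Commutative variety: every hom-set D(A,B) is a subalgebra of B^|A|,
   i.e. closed under pointwise operations. *)
Arguments surj {A B} h.

Definition commutative_variety (D : variety) : Prop :=
  forall (A B : alg (vsig D)), model D A -> model D B ->
  forall (s : sym (vsig D)) (hs : 'I_(arity _ s) -> A -> B),
    (forall i, hom (hs i)) -> hom (fun a => ops B s (fun i => hs i a)).

(* Finitely presentable object: an algebra of D presentable by finitely many
   generators g and finitely many relations R, i.e. A is generated by g,
   satisfies R, and every equation holding in A under g holds under any
   assignment satisfying R in any algebra of D (A = F(n)/<R>). *)
Definition fpres (D : variety) (A : alg (vsig D)) : Prop :=
  model D A /\
  exists (n : nat) (R : seq (term (vsig D) 'I_n * term (vsig D) 'I_n)) (g : 'I_n -> A),
    (forall a : A, exists t, eval g t = a) /\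
    (forall p, List.In p R -> eval g p.1 = eval g p.2) /\
    (forall (B : alg (vsig D)), model D B ->
       forall w : 'I_n -> B, (forall p, List.In p R -> eval w p.1 = eval w p.2) ->
       forall s t, eval g s = eval g t -> eval w s = eval w t).

Arguments fpres D A.

Definition unitAlg (S : signature) : alg S := @Alg S unit (fun _ _ => tt).
Definition prodAlg (S : signature) (A B : alg S) : alg S :=
  @Alg S (A * B)%type (fun s args => (ops A s (fun i => (args i).1), ops B s (fun i => (args i).2))).

Arguments prodAlg {S} A B.

(* D_f closed under subobjects (monos = injective homs), strong quotients
   (= surjective homs) and finite products. *)
Definition Df_closed (D : variety) : Prop :=
  (forall (A B : alg (vsig D)), fpres D A -> model D B ->
     forall m : B -> A, hom m -> injective m -> fpres D B) /\
  (forall (A B : alg (vsig D)), fpres D A -> model D B ->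
     forall e : A -> B, hom e -> surj e -> fpres D B) /\
  fpres D (unitAlg (vsig D)) /\
  (forall (A B : alg (vsig D)), fpres D A -> fpres D B -> fpres D (prodAlg A B)).

(* bimorphisms A x B -> C  (= morphisms A (x) B -> C) *)
Definition bimor (S : signature) (A B C : alg S) (h : A -> B -> C) : Prop :=
  (forall a, hom (h a)) /\ (forall b, hom (fun a => h a b)).

Arguments bimor {S A B C} h.

(* The unit I -> M is represented by an element of M (I = Psi 1 is free on 1). *)
Record dmon (S : signature) := DMon {
  mcar : alg S;
  mmul : mcar -> mcar -> mcar;
  munit : mcar }.

Arguments mcar {S} _.
Arguments mmul {S} _ _ _.
Arguments munit {S} _.

Definition is_dmon (D : variety) (M : dmon (vsig D)) : Prop :=
  model D (mcar M) /\ bimor (mmul M) /\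
  (forall a b c, mmul M a (mmul M b c) = mmul M (mmul M a b) c) /\
  (forall a, mmul M (munit M) a = a) /\ (forall a, mmul M a (munit M) = a).

Arguments is_dmon D M.

Definition monmor (S : signature) (M N : dmon S) (h : mcar M -> mcar N) : Prop :=
  hom h /\ h (munit M) = munit N /\ forall a b, h (mmul M a b) = mmul N (h a) (h b).

Arguments monmor {S M N} h.

Definition free_dmon (D : variety) (X : alg (vsig D)) (Xs : dmon (vsig D))
    (eta : X -> mcar Xs) : Prop :=
  is_dmon D Xs /\ hom eta /\
  forall M : dmon (vsig D), is_dmon D M -> forall h : X -> mcar M, hom h ->
    (exists h', monmor h' /\ forall x, h' (eta x) = h x) /\
    (forall h1 h2 : mcar Xs -> mcar M, monmor h1 -> monmor h2 ->
       (forall x, h1 (eta x) = h x) -> (forall x, h2 (eta x) = h x) ->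
       forall a, h1 a = h2 a).

Arguments free_dmon D X Xs eta.

Definition recognizes (S : signature) (Xs : dmon S) (Y : alg S) (L : mcar Xs -> Y)
    (M : dmon S) (e : mcar Xs -> mcar M) : Prop :=
  monmor e /\ exists f : mcar M -> Y, hom f /\ forall w, L w = f (e w).

Arguments recognizes {S Xs Y} L {M} e.

(* delta : X (x) Q -> Q as a bimorphism, i : I -> Q as an element, f : Q -> Y *)
Record automaton (S : signature) (X Y : alg S) := Automaton {
  qcar : alg S;
  delta : X -> qcar -> qcar;
  init : qcar;
  fin : qcar -> Y }.

Arguments qcar {S X Y} _.
Arguments delta {S X Y} _ _ _.
Arguments init {S X Y} _.
Arguments fin {S X Y} _ _.

Definition is_aut (D : variety) (X Y : alg (vsig D)) (Q : automaton _ X Y) : Prop :=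
  model D (qcar Q) /\ bimor (delta Q) /\ hom (fin Q).

Arguments is_aut D {X Y} Q.

(* e is the F-algebra homomorphism (F Q = I + X (x) Q) from the initial
   F-algebra Xs (structure [unit, mul o (eta (x) id)]) into Q with
   I-component q, i.e. the run map starting in state q. *)
Definition run_from (S : signature) (X Y : alg S) (Xs : dmon S) (eta : X -> mcar Xs)
    (Q : automaton _ X Y) (q : qcar Q) (e : mcar Xs -> qcar Q) : Prop :=
  hom e /\ e (munit Xs) = q /\ forall x w, e (mmul Xs (eta x) w) = delta Q x (e w).

Arguments run_from {S X Y Xs} eta Q q e.

Definition accepts (S : signature) (X Y : alg S) (Xs : dmon S) (eta : X -> mcar Xs)
    (Q : automaton _ X Y) (L : mcar Xs -> Y) : Prop :=
  exists e, run_from eta Q (init Q) e /\ forall w, fin Q (e w) = L w.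

Arguments accepts {S X Y Xs} eta Q L.

Definition reachable (S : signature) (X Y : alg S) (Xs : dmon S) (eta : X -> mcar Xs)
    (Q : automaton _ X Y) : Prop :=
  exists e, run_from eta Q (init Q) e /\ surj e.

Arguments reachable {S X Y Xs} eta Q.

(* simple: the coalgebra morphism q |-> (w |-> f (e_q w)) into the final
   coalgebra [Xs, Y] is injective *)
Definition simple (S : signature) (X Y : alg S) (Xs : dmon S) (eta : X -> mcar Xs)
    (Q : automaton _ X Y) : Prop :=
  forall (q1 q2 : qcar Q) e1 e2, run_from eta Q q1 e1 -> run_from eta Q q2 e2 ->
    (forall w, fin Q (e1 w) = fin Q (e2 w)) -> q1 = q2.

Arguments simple {S X Y Xs} eta Q.

(* Main.v *)
Require Import Defs.
From mathcomp Require Import all_boot.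
From Stdlib Require Import ClassicalEpsilon FunctionalExtensionality ProofIrrelevance.

Definition I0_elim (T : Type) (i : 'I_0) : T.
Proof. by case: i. Qed.

Lemma sig_inj (T : Type) (P : T -> Prop) (x y : {a | P a}) :
  proj1_sig x = proj1_sig y -> x = y.
Proof. case: x => a pa; case: y => b pb /= E; subst b. by rewrite (proof_irrelevance _ pa pb). Qed.

Section Gen.
Variable D : variety.
Notation S := (vsig D).

Lemma eval_hom (A B : alg S) (h : A -> B) V (v : V -> A) (t : term S V) :
  hom h -> h (eval v t) = eval (fun x => h (v x)) t.
Proof.
move=> hh; elim: t => [x|s ts IH] //=.
rewrite hh; f_equal; apply: functional_extensionality => i; exact: IH.
Qed.
Arguments eval_hom {A B h V} v t _.

Definition FunAlg (T : Type) (B : alg S) : alg S :=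
  @Alg S (T -> B) (fun s args t => ops B s (fun i => args i t)).

Lemma model_fun T (B : alg S) : model D B -> model D (FunAlg T B).
Proof.
move=> mB l r E v; apply: functional_extensionality => t.
have hx : hom (fun f : FunAlg T B => f t) by [].
rewrite (eval_hom v l hx) (eval_hom v r hx); exact: mB.
Qed.

Lemma model_inj (A B : alg S) (m : B -> A) : model D A -> hom m -> injective m -> model D B.
Proof. move=> mA hm inj l r E v; apply: inj; rewrite !eval_hom //; exact: mA. Qed.

Definition subA (A : alg S) (P : A -> Prop)
  (HP : forall s (args : 'I_(arity _ s) -> A), (forall i, P (args i)) -> P (ops A s args)) : alg S :=
  @Alg S {a : A | P a} (fun s args => exist P (ops A s (fun i => proj1_sig (args i)))
                                           (HP s _ (fun i => proj2_sig (args i)))).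

Lemma im_closed (A B : alg S) (f : A -> B) (hf : hom f) s (args : 'I_(arity _ s) -> B) :
  (forall i, exists a, f a = args i) -> exists a, f a = ops B s args.
Proof.
move=> H; exists (ops A s (fun i => proj1_sig (constructive_indefinite_description _ (H i)))).
rewrite hf; f_equal; apply: functional_extensionality => i.
exact: (proj2_sig (constructive_indefinite_description _ (H i))).
Qed.

Definition Im (A B : alg S) (f : A -> B) (hf : hom f) : alg S :=
  @subA B (fun b => exists a, f a = b) (fun s args H => @im_closed A B f hf s args H).
Arguments Im {A B f} hf.

Section ImS.
Variables (A B : alg S) (f : A -> B) (hf : hom f).

Definition cf (a : A) : Im hf := exist _ (f a) (ex_intro _ a erefl).
Definition pre (b : Im hf) : A := proj1_sig (constructive_indefinite_description _ (proj2_sig b)).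
Lemma pre_spec b : f (pre b) = proj1_sig b.
Proof. exact: (proj2_sig (constructive_indefinite_description _ (proj2_sig b))). Qed.
Lemma cf_pre b : cf (pre b) = b.
Proof. apply: sig_inj; exact: pre_spec. Qed.
Lemma cf_hom : hom cf.
Proof. move=> s args; apply: sig_inj => /=; exact: hf. Qed.
Lemma cf_surj : surj cf.
Proof. move=> b; exists (pre b); exact: cf_pre. Qed.
Lemma cf_eq a1 a2 : f a1 = f a2 -> cf a1 = cf a2.
Proof. move=> E; apply: sig_inj; exact: E. Qed.
Lemma hom_cf (C : alg S) (k : Im hf -> C) :
  (forall s args, k (cf (ops A s args)) = ops C s (fun i => k (cf (args i)))) -> hom k.
Proof.
move=> H s args.
have Ea : args = (fun i => cf (pre (args i))).
  by apply: functional_extensionality => i; rewrite cf_pre.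
have E := cf_hom s (fun i => pre (args i)).
rewrite Ea -E; exact: H.
Qed.
Lemma sval_hom : hom (fun b : Im hf => proj1_sig b).
Proof. by []. Qed.
Lemma sval_inj : injective (fun b : Im hf => proj1_sig b).
Proof. move=> x y; exact: sig_inj. Qed.
Lemma im_model : model D B -> model D (Im hf).
Proof. move=> mB; exact: (@model_inj B (Im hf) _ mB sval_hom sval_inj). Qed.
End ImS.

Lemma factor (A B C : alg S) (p : A -> B) (g : A -> C) :
  hom p -> surj p -> hom g -> (forall a1 a2, p a1 = p a2 -> g a1 = g a2) ->
  exists k : B -> C, hom k /\ (forall a, k (p a) = g a).
Proof.
move=> hp sp hg compat.
pose k b := g (proj1_sig (constructive_indefinite_description _ (sp b))).
have kp : forall a, k (p a) = g a.
  move=> a; apply: compat; exact: (proj2_sig (constructive_indefinite_description _ (sp (p a)))).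
exists k; split => // s args.
have -> : ops B s args = p (ops A s (fun i => proj1_sig (constructive_indefinite_description _ (sp (args i))))).
  rewrite hp; f_equal; apply: functional_extensionality => i.
  by rewrite (proj2_sig (constructive_indefinite_description _ (sp (args i)))).
by rewrite kp hg.
Qed.

Lemma fp_pow (Q : alg S) : Df_closed D -> fpres D Q -> forall n, fpres D (FunAlg 'I_n Q).
Proof.
case=> [hsub [hquo [hunit hprod]]] fQ; have mQ := fQ.1.
elim=> [|n IH].
  apply: (hquo (unitAlg _) (FunAlg 'I_0 Q) hunit (@model_fun 'I_0 Q mQ) (fun _ (i : 'I_0) => I0_elim Q i)).
    move=> s args; apply: functional_extensionality => i; exact: I0_elim i.
  move=> b; exists tt; apply: functional_extensionality => i; exact: I0_elim i.
pose m (qf : prodAlg Q (FunAlg 'I_n Q)) : FunAlg 'I_n.+1 Q :=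
  fun i => match unlift ord0 i with Some j => qf.2 j | None => qf.1 end.
apply: (hquo _ _ (hprod _ _ fQ IH) (@model_fun 'I_n.+1 Q mQ) m).
  move=> s args; apply: functional_extensionality => i /=.
  by rewrite /m; case: (unlift ord0 i).
move=> b; exists (b ord0, fun j => b (lift ord0 j)); apply: functional_extensionality => i.
by rewrite /m /=; case: (unliftP ord0 i) => [j ->|->].
Qed.

End Gen.
Arguments eval_hom {D A B h V} v t _.
Arguments FunAlg {D} T B.
Arguments model_fun {D} T B _.
Arguments model_inj {D A B} m _ _ _.
Arguments subA {D A P} HP.
Arguments Im {D A B f} hf.
Arguments cf {D A B f} hf a.
Arguments pre {D A B f} hf b.
Arguments pre_spec {D A B f} hf b.
Arguments cf_pre {D A B f} hf b.
Arguments cf_hom {D A B f} hf.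
Arguments cf_surj {D A B f} hf.
Arguments cf_eq {D A B f} hf a1 a2 _.
Arguments sval_hom {D A B f} hf.
Arguments sval_inj {D A B f} hf.
Arguments im_model {D A B f} hf _.
Arguments factor {D A B C p g} _ _ _ _.
Arguments hom_cf {D A B f} hf {C} k _.
Section Main.
Variables (D : variety) (X Y : alg (vsig D)) (Xs : dmon (vsig D)) (eta : X -> mcar Xs)
  (L : mcar Xs -> Y).
Hypotheses (fXs : free_dmon D X Xs eta) (hL : hom L).
Notation M := (mcar Xs).
Notation mul := (mmul Xs).
Notation one := (munit Xs).

Lemma dXs : is_dmon D Xs. Proof. exact: fXs.1. Qed.
Lemma mulA a b c : mul a (mul b c) = mul (mul a b) c.
Proof. by case: dXs => [_ [_ [h _]]]. Qed.
Lemma mul1 a : mul one a = a.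
Proof. by case: dXs => [_ [_ [_ [h _]]]]. Qed.
Lemma mulr1 a : mul a one = a.
Proof. by case: dXs => [_ [_ [_ [_ h]]]]. Qed.
Lemma mulhl a s args : mul a (ops M s args) = ops M s (fun i => mul a (args i)).
Proof. by case: dXs => [_ [[h _] _]]; apply: h. Qed.
Lemma mulhr b s args : mul (ops M s args) b = ops M s (fun i => mul (args i) b).
Proof. by case: dXs => [_ [[_ h] _]]; apply: h. Qed.
Lemma mXs : model D M. Proof. by case: dXs. Qed.
Lemma heta : hom eta. Proof. exact: fXs.2.1. Qed.

Lemma xs_ind (P : M -> Prop) :
  (forall s args, (forall i, P (args i)) -> P (ops M s args)) -> P one ->
  (forall a b, P a -> P b -> P (mul a b)) -> (forall x, P (eta x)) -> forall w, P w.
Proof.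
move=> Hops H1 Hmul Heta.
case: fXs => [dX [he U]].
pose A := subA Hops.
pose MM := @DMon _ A (fun a b => exist P (mul (proj1_sig a) (proj1_sig b))
                (Hmul _ _ (proj2_sig a) (proj2_sig b))) (exist P _ H1).
have dM : is_dmon D MM.
  split; first by apply: (@model_inj D M A (fun a => proj1_sig a) mXs) => // x y; exact: sig_inj.
  split; first by split=> a s args; apply: sig_inj => /=; [exact: mulhl | exact: mulhr].
  split; first by move=> a b c; apply: sig_inj => /=; exact: mulA.
  by split=> a; apply: sig_inj => /=; [exact: mul1 | exact: mulr1].
have hh : hom (fun x => exist P (eta x) (Heta x) : mcar MM).
  by move=> s args; apply: sig_inj => /=; exact: he.
case: (U MM dM _ hh) => [[h' [[mh1 [mh2 mh3]] Eh']] _].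
case: (U Xs dX eta he) => _ uniq.
have E := uniq (fun a => proj1_sig (h' a)) id.
have key : forall a, proj1_sig (h' a) = a.
  apply: E.
  - split; first by move=> s args /=; rewrite mh1.
    by split; [rewrite mh2 | move=> a b; rewrite mh3].
  - by split.
  - by move=> x; rewrite Eh'.
  - by [].
by move=> w; rewrite -(key w); exact: proj2_sig.
Qed.

Section Runs.
Variable Q : automaton _ X Y.

Lemma run_unique q e1 e2 : run_from eta Q q e1 -> run_from eta Q q e2 -> forall w, e1 w = e2 w.
Proof.
move=> [h1 [u1 d1]] [h2 [u2 d2]].
have key : forall u v, e1 v = e2 v -> e1 (mul u v) = e2 (mul u v).
  apply: (xs_ind (fun u => forall v, _)).
  - move=> s args IH v E; rewrite mulhr h1 h2; f_equal.
    apply: functional_extensionality => i; exact: IH.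
  - by move=> v E; rewrite mul1.
  - by move=> a b IHa IHb v E; rewrite -!mulA; apply: IHa; apply: IHb.
  - by move=> x v E; rewrite d1 d2 E.
move=> w; rewrite -(mulr1 w); apply: key; by rewrite u1 u2.
Qed.

Lemma run_shift q e : run_from eta Q q e -> forall w, run_from eta Q (e w) (fun u => e (mul u w)).
Proof.
move=> [h [u d]] w; split; first by move=> s args /=; rewrite mulhr h.
split; first by rewrite mul1.
by move=> x v /=; rewrite -mulA d.
Qed.

Lemma right_cong q e : run_from eta Q q e -> forall w1 w2, e w1 = e w2 ->
  forall u, e (mul u w1) = e (mul u w2).
Proof.
move=> r w1 w2 E u.
have r1 := run_shift _ _ r w1; have r2 := run_shift _ _ r w2; rewrite -E in r2.
exact: (run_unique _ _ _ r1 r2 u).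
Qed.
End Runs.
Arguments run_unique {Q q e1 e2} _ _ w.
Arguments run_shift {Q q e} _ w.
Arguments right_cong {Q q e} _ w1 w2 _ u.

Hypothesis mY : model D Y.
Hypothesis hDf : Df_closed D.

Definition beta (w : M) : FunAlg M Y := fun u => L (mul u w).
Lemma hbeta : hom beta.
Proof. move=> s args; apply: functional_extensionality => u; by rewrite /beta /= mulhl hL. Qed.
Lemma beta_lcong a a' c : beta a = beta a' -> beta (mul c a) = beta (mul c a').
Proof.
move=> E; apply: functional_extensionality => u; rewrite /beta !mulA.
exact: (f_equal (fun g => g (mul u c)) E).
Qed.

Definition MinA := Im hbeta.
Definition mdelta (x : X) (b : MinA) : MinA := cf hbeta (mul (eta x) (pre hbeta b)).
Lemma mdelta_cf x a : mdelta x (cf hbeta a) = cf hbeta (mul (eta x) a).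
Proof. apply: cf_eq; apply: beta_lcong; by rewrite pre_spec. Qed.
Definition MinAut : automaton _ X Y :=
  @Automaton _ X Y MinA mdelta (cf hbeta one) (fun b => proj1_sig b one).

Lemma mdelta_hom1 x : hom (mdelta x).
Proof.
apply: hom_cf => s args.
rewrite mdelta_cf mulhl (cf_hom hbeta); congr (ops _ s _).
by apply: functional_extensionality => i; rewrite mdelta_cf.
Qed.
Lemma mdelta_hom2 b : hom (fun x => mdelta x b).
Proof.
case: (cf_surj hbeta b) => a <- s args.
rewrite mdelta_cf heta mulhr (cf_hom hbeta); congr (ops _ s _).
by apply: functional_extensionality => i; rewrite mdelta_cf.
Qed.

Lemma min_aut : is_aut D MinAut.
Proof.
split; first exact: (im_model hbeta (model_fun M Y mY)).
split; last by [].
split; [exact: mdelta_hom1 | exact: mdelta_hom2].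
Qed.

Lemma min_run : run_from eta MinAut (init MinAut) (cf hbeta).
Proof.
split; first exact: cf_hom.
split; first by [].
by move=> x w /=; rewrite mdelta_cf.
Qed.

Lemma a_to_b :
  (exists Q : automaton _ X Y, is_aut D Q /\ fpres D (qcar Q) /\ accepts eta Q L) ->
  exists Q : automaton _ X Y, is_aut D Q /\ reachable eta Q /\ simple eta Q /\
             accepts eta Q L /\ fpres D (qcar Q).
Proof.
case=> Q [[mQ _] [fQ [e [re acc]]]].
exists MinAut; split; first exact: min_aut.
split; first by exists (cf hbeta); split; [exact: min_run | exact: cf_surj].
split.
  move=> q1 q2 e1 e2 r1 r2 E.
  have key : forall q e, run_from eta MinAut q e -> forall u, proj1_sig (e u) one = proj1_sig q u.
    move=> q e' r u.
    have rs := run_shift min_run (pre hbeta q).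
    rewrite (cf_pre hbeta q) in rs.
    rewrite (run_unique r rs u) /= -(pre_spec hbeta q) /beta mul1 //.
  apply: sig_inj; apply: functional_extensionality => u.
  rewrite -(key _ _ r1) -(key _ _ r2); exact: E.
split.
  exists (cf hbeta); split; first exact: min_run.
  by move=> w /=; rewrite /beta mul1.
have he : hom e := re.1.
have fR : fpres D (Im he).
  exact: (hDf.1 (qcar Q) (Im he) fQ (im_model he mQ) (fun b => proj1_sig b) (sval_hom he) (sval_inj he)).
have compat : forall a1 a2, cf he a1 = cf he a2 -> cf hbeta a1 = cf hbeta a2.
  move=> a1 a2 E; have E' : e a1 = e a2 := f_equal (@proj1_sig _ _) E.
  apply: cf_eq; apply: functional_extensionality => u.
  by rewrite /beta -!acc (right_cong re _ _ E' u).
case: (factor (cf_hom he) (cf_surj he) (cf_hom hbeta) compat) => k [hk kp].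
apply: (hDf.2.1 _ _ fR (im_model hbeta (model_fun M Y mY)) k hk).
move=> b; case: (cf_surj hbeta b) => a <-; exists (cf he a); exact: kp.
Qed.
Definition theta (w : M) : FunAlg M (FunAlg M Y) := fun u v => L (mul (mul u w) v).
Lemma htheta : hom theta.
Proof.
move=> s args; apply: functional_extensionality => u; apply: functional_extensionality => v.
by rewrite /theta /= mulhl mulhr hL.
Qed.
Lemma theta_cong a a' b b' : theta a = theta a' -> theta b = theta b' ->
  theta (mul a b) = theta (mul a' b').
Proof.
move=> Ea Eb; apply: functional_extensionality => u; apply: functional_extensionality => v.
transitivity (theta a u (mul b v)); first by rewrite /theta /= !mulA.
rewrite Ea; transitivity (theta b (mul u a') v); first by rewrite /theta /= !mulA.
by rewrite Eb /theta /= !mulA.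
Qed.

Definition SynA := Im htheta.
Definition smul (b1 b2 : SynA) : SynA := cf htheta (mul (pre htheta b1) (pre htheta b2)).
Definition Syn : dmon (vsig D) := @DMon _ SynA smul (cf htheta one).
Lemma smul_cf a b : mmul Syn (cf htheta a) (cf htheta b) = cf htheta (mul a b).
Proof. apply: cf_eq; apply: theta_cong; by rewrite pre_spec. Qed.

Lemma syn_dmon : is_dmon D Syn.
Proof.
split; first exact: (im_model htheta (model_fun M _ (model_fun M Y mY))).
split.
  split.
    move=> b; case: (cf_surj htheta b) => a <-; apply: hom_cf => s args.
    rewrite smul_cf mulhl (cf_hom htheta); congr (ops _ s _).
    by apply: functional_extensionality => i; rewrite smul_cf.
  move=> b; case: (cf_surj htheta b) => a <-; apply: hom_cf => s args.
  rewrite smul_cf mulhr (cf_hom htheta); congr (ops _ s _).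
  by apply: functional_extensionality => i; rewrite smul_cf.
split.
  move=> b1 b2 b3; case: (cf_surj htheta b1) => a1 <-; case: (cf_surj htheta b2) => a2 <-.
  case: (cf_surj htheta b3) => a3 <-; by rewrite !smul_cf mulA.
split; move=> b; case: (cf_surj htheta b) => a <-.
  by rewrite (smul_cf one a) mul1.
by rewrite (smul_cf a one) mulr1.
Qed.

Lemma cf_monmor : @monmor _ Xs Syn (cf htheta).
Proof.
split; first exact: cf_hom.
split; first by [].
by move=> a b; rewrite smul_cf.
Qed.

Lemma a_to_d :
  (exists Q : automaton _ X Y, is_aut D Q /\ fpres D (qcar Q) /\ accepts eta Q L) ->
  exists (MM : dmon (vsig D)) (e : mcar Xs -> mcar MM),
             is_dmon D MM /\ recognizes L e /\ surj e /\
             (forall (M' : dmon (vsig D)) (e' : mcar Xs -> mcar M'),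
                is_dmon D M' -> recognizes L e' -> surj e' ->
                exists h : mcar M' -> mcar MM, monmor h /\ forall w, e w = h (e' w)) /\
             fpres D (mcar MM).
Proof.
case=> Q [[mQ _] [fQ [e [re acc]]]].
exists Syn, (cf htheta); split; first exact: syn_dmon.
split.
  split; first exact: cf_monmor.
  exists (fun b : SynA => proj1_sig b one one); split; first by [].
  by move=> w /=; rewrite /theta mul1 mulr1.
split; first exact: cf_surj.
split.
  move=> M' e' dM' [[he' [e1 em]] [f' [hf' Lf]]] se'.
  have compat : forall a1 a2, e' a1 = e' a2 -> cf htheta a1 = cf htheta a2.
    move=> a1 a2 E; apply: cf_eq; apply: functional_extensionality => u.
    apply: functional_extensionality => v.
    by rewrite /theta /= !Lf !em E.
  case: (factor he' se' (cf_hom htheta) compat) => k [hk kp].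
  exists k; split; last by move=> w; rewrite kp.
  split; first exact: hk.
  split; first by rewrite -e1 kp.
  move=> m1 m2; case: (se' m1) => a1 <-; case: (se' m2) => a2 <-.
  by rewrite -em !kp smul_cf.
have he : hom e := re.1.
have fR : fpres D (Im he).
  exact: (hDf.1 (qcar Q) (Im he) fQ (im_model he mQ) (fun b => proj1_sig b) (sval_hom he) (sval_inj he)).
case: (fR) => mR [n [Rl [g [gen _]]]].
pose v i := pre he (g i).
pose psi (w : M) : FunAlg 'I_n (qcar Q) := fun i => e (mul w (v i)).
have hpsi : hom psi.
  move=> s args; apply: functional_extensionality => i.
  by rewrite /psi /= mulhr he.
have key : forall w1 w2, psi w1 = psi w2 -> forall v0, e (mul w1 v0) = e (mul w2 v0).
  move=> w1 w2 E v0; case: (gen (cf he v0)) => t Et.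
  pose V := eval v t.
  have EV : e V = e v0.
    rewrite /V; rewrite (eval_hom v t he).
    transitivity (eval (fun i => proj1_sig (g i)) t).
      congr (eval _ t); apply: functional_extensionality => i; exact: pre_spec.
    rewrite -(eval_hom g t (sval_hom he)) Et //.
  have EW : forall w, e (mul w V) = eval (fun i => psi w i) t.
    move=> w; have hw : hom (fun x => e (mul w x)).
      by move=> s args /=; rewrite mulhl he.
    by rewrite /V; rewrite (eval_hom v t hw).
  rewrite -(right_cong re _ _ EV w1) -(right_cong re _ _ EV w2) !EW E //.
have compat : forall a1 a2, cf hpsi a1 = cf hpsi a2 -> cf htheta a1 = cf htheta a2.
  move=> a1 a2 E; have E' : psi a1 = psi a2 := f_equal (@proj1_sig _ _) E.
  apply: cf_eq; apply: functional_extensionality => u; apply: functional_extensionality => v0.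
  by rewrite /theta /= -!acc -!mulA (right_cong re _ _ (key _ _ E' v0) u).
have fP : fpres D (Im hpsi).
  exact: (hDf.1 (FunAlg 'I_n (qcar Q)) (Im hpsi) (@fp_pow D (qcar Q) hDf fQ n) (im_model hpsi (model_fun 'I_n _ mQ))
            (fun b => proj1_sig b) (sval_hom hpsi) (sval_inj hpsi)).
case: (factor (cf_hom hpsi) (cf_surj hpsi) (cf_hom htheta) compat) => k [hk kp].
apply: (hDf.2.1 _ SynA fP (im_model htheta (model_fun M _ (model_fun M Y mY))) k hk).
move=> b; case: (cf_surj htheta b) => a <-; exists (cf hpsi a); exact: kp.
Qed.

Lemma c_to_a :
  (exists (MM : dmon (vsig D)) (e : mcar Xs -> mcar MM),
             is_dmon D MM /\ recognizes L e /\ fpres D (mcar MM)) ->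
  exists Q : automaton _ X Y, is_aut D Q /\ fpres D (qcar Q) /\ accepts eta Q L.
Proof.
case=> MM [e [dM [[[he [e1 em]] [f [hf Lf]]] fM]]].
exists (@Automaton _ X Y (mcar MM) (fun x m => mmul MM (e (eta x)) m) (munit MM) f).
case: dM => [mM [[bl br] _]].
split.
  split; first exact: mM.
  split; last exact: hf.
  split; first by move=> x; exact: bl.
  by move=> m s args /=; rewrite heta he; exact: br.
split; first exact: fM.
exists e; split; last by move=> w /=; rewrite Lf.
split; first exact: he.
split; first exact: e1.
by move=> x w /=; rewrite em.
Qed.
End Main.

Theorem mainTheorem11 (D : variety) (X Y : alg (vsig D)) (Xs : dmon (vsig D))
    (eta : X -> mcar Xs) (L : mcar Xs -> Y) :
  commutative_variety D -> Df_closed D ->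
  model D X -> model D Y -> free_dmon D X Xs eta -> hom L ->
  let a := exists Q : automaton _ X Y, is_aut D Q /\ fpres D (qcar Q) /\ accepts eta Q L in
  let b := exists Q : automaton _ X Y, is_aut D Q /\ reachable eta Q /\ simple eta Q /\
             accepts eta Q L /\ fpres D (qcar Q) in
  let c := exists (M : dmon (vsig D)) (e : mcar Xs -> mcar M),
             is_dmon D M /\ recognizes L e /\ fpres D (mcar M) in
  let d := exists (M : dmon (vsig D)) (e : mcar Xs -> mcar M),
             is_dmon D M /\ recognizes L e /\ surj e /\
             (forall (M' : dmon (vsig D)) (e' : mcar Xs -> mcar M'),
                is_dmon D M' -> recognizes L e' -> surj e' ->
                exists h : mcar M' -> mcar M, monmor h /\ forall w, e w = h (e' w)) /\
             fpres D (mcar M) in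
  (a <-> b) /\ (a <-> c) /\ (a <-> d).
Proof.
move=> _ hDf _ mY fXs hL; cbv zeta.
have AB := @a_to_b D X Y Xs eta L fXs hL mY hDf.
have AD := @a_to_d D X Y Xs eta L fXs hL mY hDf.
have CA := @c_to_a D X Y Xs eta L fXs.
have DC : forall P : forall M : dmon (vsig D), (mcar Xs -> mcar M) -> Prop,
  (exists (M : dmon (vsig D)) (e : mcar Xs -> mcar M),
             is_dmon D M /\ recognizes L e /\ surj e /\ P M e /\ fpres D (mcar M)) ->
  exists (M : dmon (vsig D)) (e : mcar Xs -> mcar M),
             is_dmon D M /\ recognizes L e /\ fpres D (mcar M).
  by move=> P [M [e [dM [r [_ [_ fM]]]]]]; exists M, e.
split.
  split; first exact: AB.
  by case=> Q [iQ [_ [_ [acc fQ]]]]; exists Q.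
split.
  split; [move=> H; apply: (DC _ (AD H)) | exact: CA].
split; [exact: AD | move=> H; apply: CA; exact: (DC _ H)].
Qed.
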